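(* Let $A$ be a Banach algebra, $(\pi_1,X,\pi_2)$ a Banach $A$-module and $D:A\to X^*$ a derivation. Then for all $a^{**},b^{**}\in A^{**}$: (i) $D^{**}(a^{**}\Box b^{**})=\pi_1^{****}(D^{**}(a^{**}),b^{**})+\pi_2^{r*r***}(a^{**},D^{**}(b^{**}))$; (ii) $D^{**}(a^{**}\lozenge b^{**})=\pi_1^{*r***r}(D^{**}(a^{**}),b^{**})+\pi_2^{r****r}(a^{**},D^{**}(b^{**}))$.
   Context: Normed spaces are identified with their canonical images in their second duals. For a bounded bilinear map $f:X\times Y\to Z$, the adjoint $f^*:Z^*\times X\to Y^*$ is defined by $\langle f^*(z^*,x),y\rangle=\langle z^*,f(x,y)\rangle$; iterating gives $f^{**}:Y^{**}\times Z^*\to X^*$, $f^{***}:X^{**}\times Y^{**}\to Z^{**}$, $f^{****}:Z^{***}\times X^{**}\to Y^{***}$, etc. The flip is $f^r(y,x)=f(x,y)$; superscripts are applied successively left to right (e.g. $\pi_2^{r*r***}$: flip $\pi_2$, adjoint, flip, three adjoints; $\pi_1^{*r***r}$: adjoint, flip, three adjoints, flip). For the multiplication $\pi$ of $A$, the Arens products on $A^{**}$ are $a^{**}\Box b^{**}=\pi^{***}(a^{**},b^{**})$ and $a^{**}\lozenge b^{**}=\pi^{r***r}(a^{**},b^{**})$. A Banach $A$-module $(\pi_1,X,\pi_2)$ consists of a Banach space $X$ and bounded bilinear maps $\pi_1:A\times X\to X$, $\pi_2:X\times A\to X$ with $\pi_1(ab,x)=\pi_1(a,\pi_1(b,x))$,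 $\pi_2(x,ab)=\pi_2(\pi_2(x,a),b)$, $\pi_1(a,\pi_2(x,b))=\pi_2(\pi_1(a,x),b)$. A derivation $D:A\to X^*$ is a bounded linear map with $D(ab)=\pi_1^*(D(a),b)+\pi_2^{r*r}(a,D(b))$ for all $a,b\in A$ (here $\pi_1^*:X^*\times A\to X^*$ and $\pi_2^{r*r}:A\times X^*\to X^*$ are the dual module actions). $D^{**}:A^{**}\to X^{***}$ is the second adjoint of $D$. *)

(* Defs.v *)
From HB Require Import structures.
From mathcomp Require Import all_boot all_order all_algebra.
From mathcomp Require Import all_classical all_reals.
From mathcomp Require Import topology normedtype.
Set Implicit Arguments. Unset Strict Implicit. Unset Printing Implicit Defensive.
Import Order.TTheory GRing.Theory Num.Theory.
Import numFieldNormedType.Exports.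
Local Open Scope ring_scope.

(* A "space" is a carrier type together with the set of its genuine         *)
(* elements [mem], the linear-combination relation [comb c u v w]           *)
(* ("w = c u + v") and the norm-bound relation [bnd u r] ("||u|| <= r").     *)
(* The dual of a space S has carrier [spt S -> K]; its genuine elements are   *)
(* the bounded linear functionals on the genuine elements of S, with the     *)
(* operator-norm bound relation:  ||f|| <= r  iff  |f u| <= r d whenever     *)
(* ||u|| <= d.  Two dual elements are identified when they agree on all      *)
(* genuine elements of S.                                                    *)

Record space (K : numFieldType) := Space {
  spt : Type;
  smem : spt -> Prop;
  scomb : K -> spt -> spt -> spt -> Prop;
  sbnd : spt -> K -> Prop }.

Definition nspace (K : numFieldType) (V : normedModType K) : space K :=
  @Space K V (fun _ => True) (fun c u v w => w = c *: u + v)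
    (fun u r => `|u| <= r).

Definition is_dual_elt (K : numFieldType) (S : space K) (f : spt S -> K) :=
  (forall c u v w, smem u -> smem v -> smem w -> scomb c u v w ->
      f w = c * f u + f v) /\
  (exists M : K, forall u r, smem u -> sbnd u r -> `|f u| <= M * r).

Definition dual (K : numFieldType) (S : space K) : space K :=
  @Space K (spt S -> K) (@is_dual_elt K S)
    (fun c f g h => forall u, smem u -> h u = c * f u + g u)
    (fun f r => forall u d, smem u -> sbnd u d -> `|f u| <= r * d).

Definition adj (K P Q R : Type) (f : P -> Q -> R) : (R -> K) -> P -> (Q -> K) :=
  fun z x y => z (f x y).

Definition flip (P Q R : Type) (f : P -> Q -> R) : Q -> P -> R :=
  fun y x => f x y.

Definition ladj (K U V : Type) (T : U -> V) : (V -> K) -> (U -> K) :=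
  fun g u => g (T u).

Definition bounded_bilinear (K : numFieldType) (U V W : normedModType K)
    (f : U -> V -> W) :=
  (forall u c v v', f u (c *: v + v') = c *: f u v + f u v') /\
  (forall v c u u', f (c *: u + u') v = c *: f u v + f u' v) /\
  (exists M : K, forall u v, `|f u v| <= M * `|u| * `|v|).

Definition banach_algebra (K : numFieldType) (A : completeNormedModType K)
    (pi : A -> A -> A) :=
  bounded_bilinear pi /\
  (forall a b c, pi (pi a b) c = pi a (pi b c)) /\
  (forall a b, `|pi a b| <= `|a| * `|b|).

Definition banach_module (K : numFieldType) (A : completeNormedModType K)
    (pi : A -> A -> A) (X : completeNormedModType K)
    (pi1 : A -> X -> X) (pi2 : X -> A -> X) :=
  bounded_bilinear pi1 /\ bounded_bilinear pi2 /\
  (forall a b x, pi1 (pi a b) x = pi1 a (pi1 b x)) /\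
  (forall a b x, pi2 x (pi a b) = pi2 (pi2 x a) b) /\
  (forall a b x, pi1 a (pi2 x b) = pi2 (pi1 a x) b).

Definition derivation (K : numFieldType) (A : completeNormedModType K)
    (pi : A -> A -> A) (X : completeNormedModType K)
    (pi1 : A -> X -> X) (pi2 : X -> A -> X) (D : A -> (X -> K)) :=
  (forall a, @smem K (dual (nspace X)) (D a)) /\
  (forall c a b x, D (c *: a + b) x = c * D a x + D b x) /\
  (exists M : K, forall a, @sbnd K (dual (nspace X)) (D a) (M * `|a|)) /\
  (forall a b x, D (pi a b) x =
      adj pi1 (D a) b x + flip (adj (flip pi2)) a (D b) x).

Definition arens_box (K : numFieldType) (A : Type) (pi : A -> A -> A) :=
  adj (K := K) (adj (K := K) (adj (K := K) pi)).
Definition arens_loz (K : numFieldType) (A : Type) (pi : A -> A -> A) :=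
  flip (adj (K := K) (adj (K := K) (adj (K := K) (flip pi)))).

(* Main.v *)
Require Import Defs.
From HB Require Import structures.
From mathcomp Require Import all_boot all_order all_algebra.
From mathcomp Require Import all_classical all_reals.
From mathcomp Require Import topology normedtype.
From mathcomp Require Import ring.
Import Order.TTheory GRing.Theory Num.Theory.
Import numFieldNormedType.Exports.
Set Implicit Arguments. Unset Strict Implicit. Unset Printing Implicit Defensive.
Local Open Scope ring_scope.

Definition lin1 (K : numFieldType) (V : normedModType K) (f : V -> K) :=
  forall c u v, f (c *: u + v) = c * f u + f v.
Definition BLf (K : numFieldType) (V : normedModType K) (f : V -> K) :=
  @smem K (dual (nspace V)) f.

Lemma normM_bnd (K : numFieldType) (t M p : K) :
  `|t| <= M * p -> 0 <= p -> `|t| <= `|M| * p.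
Proof.
move=> h hp; have h0 : 0 <= M * p by apply: le_trans h; exact: normr_ge0.
by rewrite (le_trans h) // -{1}(ger0_norm h0) normrM (ger0_norm hp).
Qed.

Lemma BLf_intro (K : numFieldType) (V : normedModType K) (f : V -> K) :
  lin1 f -> (exists M, forall u, `|f u| <= M * `|u|) -> BLf f.
Proof.
move=> hl [M hM]; split.
  by move=> c u v w _ _ _ /= ->; exact: hl.
exists `|M| => u r _ /= hur.
apply: le_trans (normM_bnd (hM u) (normr_ge0 _)) _.
by rewrite ler_wpM2l // normr_ge0.
Qed.

Lemma BLf_elim (K : numFieldType) (V : normedModType K) (f : V -> K) :
  BLf f -> lin1 f /\ exists M, forall u, `|f u| <= M * `|u|.
Proof.
move=> [hl [M hM]]; split.
  by move=> c u v; exact: (hl c u v (c *: u + v) I I I erefl).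
by exists M => u; exact: (hM u `|u| I (lexx _)).
Qed.

Definition bil (K : numFieldType) (V W : normedModType K) (T : V -> W -> K) :=
  (forall w, lin1 (fun v => T v w)) /\ (forall v, lin1 (T v)) /\
  exists M, forall v w, `|T v w| <= M * `|v| * `|w|.

Lemma bil_BLf2 (K : numFieldType) (V W : normedModType K) (T : V -> W -> K) v :
  bil T -> BLf (T v).
Proof.
move=> [_ [h2 [M hM]]]; apply: BLf_intro => //.
by exists (M * `|v|) => w; exact: hM.
Qed.

Lemma bil_BLf1 (K : numFieldType) (V W : normedModType K) (T : V -> W -> K) w :
  bil T -> BLf (fun v => T v w).
Proof.
move=> [h1 [_ [M hM]]]; apply: BLf_intro => //.
by exists (M * `|w|) => v; rewrite mulrAC; exact: hM.
Qed.

Lemma bil_flip (K : numFieldType) (V W : normedModType K) (T : V -> W -> K) :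
  bil T -> bil (fun w v => T v w).
Proof.
move=> [h1 [h2 [M hM]]]; split => //; split => //.
by exists M => w v; rewrite mulrAC; exact: hM.
Qed.

Definition ddm (K : numFieldType) (V : normedModType K) (P : (V -> K) -> K) :=
  @smem K (dual (dual (nspace V))) P.

Lemma dd_lin (K : numFieldType) (V : normedModType K) (P : (V -> K) -> K)
  c g1 g2 h : ddm P -> BLf g1 -> BLf g2 -> BLf h ->
  (forall w, h w = c * g1 w + g2 w) -> P h = c * P g1 + P g2.
Proof. by move=> [hl _] h1 h2 h3 e; apply: hl => // u _; exact: e. Qed.

Lemma dd_add (K : numFieldType) (V : normedModType K) (P : (V -> K) -> K)
  g1 g2 h : ddm P -> BLf g1 -> BLf g2 ->
  (forall w, h w = g1 w + g2 w) -> P h = P g1 + P g2.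
Proof.
move=> hP h1 h2 e.
have [l1 [M1 hM1]] := BLf_elim h1; have [l2 [M2 hM2]] := BLf_elim h2.
have hh : BLf h.
  apply: BLf_intro.
    move=> c u v; rewrite !e l1 l2; ring.
  exists (M1 + M2) => u; rewrite e mulrDl.
  by apply: le_trans (ler_normD _ _) _; apply: lerD.
rewrite -[P g1]mul1r; apply: dd_lin => // w; by rewrite mul1r.
Qed.

Lemma dd_bnd (K : numFieldType) (V : normedModType K) (P : (V -> K) -> K) :
  ddm P -> exists MP, forall g C, BLf g -> 0 <= C ->
    (forall w, `|g w| <= C * `|w|) -> `|P g| <= MP * C.
Proof.
move=> [_ [M hM]]; exists M => g C hg hC hgC; apply: hM => // w d _ /= hwd.
by apply: le_trans (hgC w) _; exact: ler_wpM2l.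
Qed.

Lemma lift (K : numFieldType) (V W : normedModType K) (P : (W -> K) -> K)
  (T : V -> W -> K) : ddm P -> bil T -> BLf (fun v => P (T v)).
Proof.
move=> hP hT; have hb v := bil_BLf2 v hT.
case: hT => [h1 [h2 [M hM]]].
apply: BLf_intro.
  move=> c u v /=; apply: dd_lin => // w; exact: h1.
have [MP hMP] := dd_bnd hP.
exists (MP * `|M|) => v; rewrite -mulrA; apply: hMP => //.
  by rewrite mulr_ge0.
move=> w; rewrite -mulrA; apply: normM_bnd; first by rewrite mulrA.
by rewrite mulr_ge0.
Qed.

Definition tril (K : numFieldType) (U V W : normedModType K)
  (S : U -> V -> W -> K) :=
  (forall y w, lin1 (fun x => S x y w)) /\ (forall x w, lin1 (fun y => S x y w)) /\
  (forall x y, lin1 (S x y)) /\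
  exists M, forall x y w, `|S x y w| <= M * `|x| * `|y| * `|w|.

Lemma tril_BLf (K : numFieldType) (U V W : normedModType K)
  (S : U -> V -> W -> K) x y : tril S -> BLf (S x y).
Proof.
move=> [_ [_ [h3 [M hM]]]]; apply: BLf_intro => //.
by exists (M * `|x| * `|y|) => w; exact: hM.
Qed.

Lemma lift3 (K : numFieldType) (U V W : normedModType K) (P : (W -> K) -> K)
  (S : U -> V -> W -> K) : ddm P -> tril S -> bil (fun x y => P (S x y)).
Proof.
move=> hP hS; have hb x y := tril_BLf x y hS.
case: hS => [h1 [h2 [h3 [M hM]]]].
have [MP hMP] := dd_bnd hP.
split.
  move=> y c u v /=; apply: dd_lin => // w; exact: h1.
split.
  move=> x c u v /=; apply: dd_lin => // w; exact: h2.
exists (MP * `|M|) => x y; rewrite -!mulrA; apply: hMP => //.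
  by rewrite !mulr_ge0.
move=> w; rewrite !mulrA -(mulrA `|M|) -(mulrA `|M|) -mulrA.
apply: normM_bnd; first by rewrite !mulrA.
by rewrite !mulr_ge0.
Qed.

Theorem lemma4p1 (K : numFieldType) (A : completeNormedModType K)
  (pi : A -> A -> A) (X : completeNormedModType K)
  (pi1 : A -> X -> X) (pi2 : X -> A -> X) (D : A -> (X -> K)) :
  banach_algebra pi ->
  banach_module pi pi1 pi2 ->
  derivation pi pi1 pi2 D ->
  forall (a b : (A -> K) -> K),
    @smem K (dual (dual (nspace A))) a ->
    @smem K (dual (dual (nspace A))) b ->
    (* (i) *)
    (forall F : (X -> K) -> K, @smem K (dual (dual (nspace X))) F ->
       ladj (ladj D) (arens_box (K := K) pi a b) F =
         adj (K := K) (adj (K := K) (adj (K := K) (adj (K := K) pi1)))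
           (ladj (ladj D) a) b F
       + adj (K := K) (adj (K := K) (adj (K := K)
           (flip (adj (K := K) (flip pi2))))) a (ladj (ladj D) b) F) /\
    (* (ii) *)
    (forall F : (X -> K) -> K, @smem K (dual (dual (nspace X))) F ->
       ladj (ladj D) (arens_loz (K := K) pi a b) F =
         flip (adj (K := K) (adj (K := K) (adj (K := K)
           (flip (adj (K := K) pi1))))) (ladj (ladj D) a) b F
       + flip (adj (K := K) (adj (K := K) (adj (K := K) (adj (K := K)
           (flip pi2))))) a (ladj (ladj D) b) F).
Proof.
move=> _ [[p1r [p1l [M1 hM1]]] [[p2r [p2l [M2 hM2]]] _]] [Dm [Dl [[MD hMD] Dd]]].
move=> a b ha hb.
have DB x : BLf (D x) := Dm x.
have Dlin x : lin1 (D x) := (BLf_elim (DB x)).1.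
have Dbnd x z : `|D x z| <= MD * `|x| * `|z|.
  exact: (hMD x z `|z| I (lexx _)).
have tr1 : tril (fun (x y : A) (w : X) => D x (pi1 y w)).
  split; first by move=> y w c u v; exact: Dl.
  split; first by move=> x w c u v /=; rewrite p1l Dlin.
  split; first by move=> x y c u v /=; rewrite p1r Dlin.
  exists (MD * M1) => x y w.
  have := hMD x (pi1 y w) (M1 * `|y| * `|w|) I (hM1 y w).
  suff -> : MD * M1 * `|x| * `|y| * `|w| = MD * `|x| * (M1 * `|y| * `|w|) by [].
  ring.
have tr2 : tril (fun (x y : A) (w : X) => D y (pi2 w x)).
  split; first by move=> y w c u v /=; rewrite p2r Dlin.
  split; first by move=> x w c u v; exact: Dl.
  split; first by move=> x y c u v /=; rewrite p2l Dlin.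
  exists (MD * M2) => x y w.
  have := hMD y (pi2 w x) (M2 * `|w| * `|x|) I (hM2 w x).
  suff -> : MD * M2 * `|x| * `|y| * `|w| = MD * `|y| * (M2 * `|w| * `|x|) by [].
  ring.
have hF0 F : @smem K (dual (dual (nspace X))) F -> ddm F := id.
have bl1 F hF := lift3 (hF0 F hF) tr1.
have bl2 F hF := lift3 (hF0 F hF) tr2.
have ha' : ddm a := ha.
have hb' : ddm b := hb.
split => F hF.
  rewrite /ladj /arens_box /adj /flip /=.
  apply: (dd_add ha'); [exact: (lift hb' (bl1 F hF))|exact: (lift hb' (bl2 F hF))|].
  move=> x.
  apply: (dd_add hb'); [exact: (bil_BLf2 x (bl1 F hF))|exact: (bil_BLf2 x (bl2 F hF))|].
  move=> y.
  apply: (dd_add (hF0 F hF)); [exact: (tril_BLf x y tr1)|exact: (tril_BLf x y tr2)|].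
  move=> w; exact: Dd.
rewrite /ladj /arens_loz /adj /flip /=.
apply: (dd_add hb'); [exact: (lift ha' (bil_flip (bl1 F hF)))|exact: (lift ha' (bil_flip (bl2 F hF)))|].
move=> y.
apply: (dd_add ha'); [exact: (bil_BLf1 y (bl1 F hF))|exact: (bil_BLf1 y (bl2 F hF))|].
move=> x.
apply: (dd_add (hF0 F hF)); [exact: (tril_BLf x y tr1)|exact: (tril_BLf x y tr2)|].
move=> w; exact: Dd.
Qed.
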